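(* If $G$ is a connected $(C_4,\text{diamond})$-free graph and $1\le k\le|V(G)|-1$, then $F_k(G)$ is a prime graph.
   Context: $F_k(G)$ is the graph on the $k$-subsets of $V(G)$ with $A,B$ adjacent iff $A\triangle B$ is an edge of $G$. A diamond is $K_4$ minus an edge; $(C_4,\text{diamond})$-free means no induced $4$-cycle and no induced diamond. A graph is composite if it is isomorphic to the Cartesian product of two or more nontrivial graphs, and prime otherwise. *)

(* Defs.v *)
From mathcomp Require Import all_boot.
Set Implicit Arguments. Unset Strict Implicit. Unset Printing Implicit Defensive.

Definition simple_graph (V : finType) (e : rel V) : Prop :=
  symmetric e /\ irreflexive e.

Definition connected_graph (V : finType) (e : rel V) : Prop :=
  forall x y : V, connect e x y.

Definition has_induced_C4 (V : finType) (e : rel V) : Prop :=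
  exists a b c d : V,
    uniq [:: a; b; c; d] /\
    e a b /\ e b c /\ e c d /\ e d a /\ ~~ e a c /\ ~~ e b d.

Definition has_induced_diamond (V : finType) (e : rel V) : Prop :=
  exists a b c d : V,
    uniq [:: a; b; c; d] /\
    e a b /\ e a c /\ e a d /\ e b c /\ e b d /\ ~~ e c d.

Definition C4_diamond_free (V : finType) (e : rel V) : Prop :=
  ~ has_induced_C4 e /\ ~ has_induced_diamond e.

(* k-token graph F_k(G): vertices are the k-subsets of V(G);
   A ~ B iff the symmetric difference of A and B is an edge of G *)
Definition tokens (V : finType) (k : nat) := {A : {set V} | #|A| == k}.

Definition token_rel (V : finType) (e : rel V) (k : nat) : rel (tokens V k) :=
  fun A B => [exists x : V, exists y : V,
      e x y && (((val A :\: val B) :|: (val B :\: val A)) == [set x; y])].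

Definition cart_rel (V1 V2 : finType) (e1 : rel V1) (e2 : rel V2) : rel (V1 * V2) :=
  fun p q => ((p.1 == q.1) && e2 p.2 q.2) || ((p.2 == q.2) && e1 p.1 q.1).

(* composite: isomorphic to a Cartesian product of two nontrivial graphs
   (a product of two or more nontrivial graphs can always be grouped into
   a product of two nontrivial graphs, so this is equivalent) *)
Definition composite (V : finType) (e : rel V) : Prop :=
  exists (V1 V2 : finType) (e1 : rel V1) (e2 : rel V2),
    simple_graph e1 /\ simple_graph e2 /\ 1 < #|V1| /\ 1 < #|V2| /\
    exists f : V -> V1 * V2, bijective f /\
      forall x y : V, e x y = cart_rel e1 e2 (f x) (f y).

Definition prime_graph (V : finType) (e : rel V) : Prop := ~ composite e.
Arguments token_rel {V} e k _ _.

(* Main.v *)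
Require Import Defs.
From mathcomp Require Import all_boot.
Set Implicit Arguments. Unset Strict Implicit. Unset Printing Implicit Defensive.


Section SetLevel.
Variables (V : finType) (e : rel V).
Hypothesis esym : symmetric e.
Hypothesis eirr : irreflexive e.
Hypothesis free : C4_diamond_free e.

Definition swap (A B : {set V}) x y :=
  [/\ x \in A, x \notin B, y \in B, y \notin A &
      forall z, z != x -> z != y -> (z \in A) = (z \in B)].

Lemma swap_mem A B x y z : swap A B x y ->
  (z \in B) = (z == y) || ((z != x) && (z \in A)).
Proof.
case=> xA xB yB yA H.
case: (eqVneq z y) => [->|zy] //=.
case: (eqVneq z x) => [->|zx] //=; first by rewrite (negbTE xB).
by rewrite H.
Qed.

Lemma K22 x w y y' : x != w -> x != y -> x != y' -> w != y -> w != y' -> y != y' ->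
  e x y -> e x y' -> e w y -> e w y' -> ~~ e y y' -> False.
Proof.
move=> xw xy xy' wy wy' yy' exy exy' ewy ewy' nyy.
case: free => nC4 nD.
case: (boolP (e x w)) => exw.
  apply: nD; exists x, w, y, y'.
  by rewrite /= !inE !negb_or xw xy xy' wy wy' yy'.
apply: nC4; exists x, y, w, y'.
rewrite /= !inE !negb_or xy xw xy' (eq_sym y w) wy yy' wy'.
by rewrite exy (esym y w) ewy ewy' (esym y' x) exy' exw.
Qed.

Lemma conf_src A Q R S x y y' a b c d :
  swap A Q x y -> swap A R x y' -> y != y' -> ~~ e y y' -> e x y -> e x y' ->
  swap Q S a b -> e a b -> swap S R c d -> e c d -> S != A -> False.
Proof.
move=> sQ sR yy' nyy exy exy' sQS eab sSR ecd SA.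
have [xA _ yQ yA _] := sQ.
have [_ _ y'R y'A _] := sR.
have [aQ aS bS bQ HQS] := sQS.
have [cS cR dR dS HSR] := sSR.
have xy : x != y by apply: contraNneq yA => <-.
have xy' : x != y' by apply: contraNneq y'A => <-.
case: (eqVneq a y) => [ay|ay].
- subst a.
  have bx : b != x.
    apply: contraNneq SA => bx; subst b; apply/eqP/setP => z.
    rewrite (swap_mem z sQS) (swap_mem z sQ).
    case: (eqVneq z x) => [->|zx] //=.
    by case: (eqVneq z y) => [->|zy] //=; rewrite (negbTE yA).
  have by' : b != y' by apply: contraNneq nyy => <-.
  have by_ : b != y by apply: contraNneq bQ => ->.
  have bA : b \notin A.
    by move: bQ; rewrite (swap_mem b sQ) (negbTE by_) bx.
  have bR : b \notin R by rewrite (swap_mem b sR) (negbTE by') (negbTE bA) andbF.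
  have bc : b = c.
    apply/eqP; apply: contraNT bR => bc.
    have bd : b != d by apply: contraNneq dS => <-.
    by rewrite -(HSR b bc bd).
  have y'S : y' \notin S.
    rewrite (swap_mem y' sQS) (swap_mem y' sQ) eq_sym (negbTE by') /=.
    by rewrite (eq_sym y' y) (negbTE yy') (negbTE y'A) andbF.
  have y'c : y' != c by apply: contraTneq cS => <-.
  have y'd : y' = d.
    apply/eqP; apply: contraNT y'S => y'd.
    by rewrite (HSR y' y'c y'd).
  subst c d.
  apply: (K22 (x:=x) (w:=b) (y:=y) (y':=y')) => //.
  all: try by rewrite eq_sym.
  by rewrite esym.
- have ax : a != x by apply: contraTneq aQ => ->; have [] := sQ.
  have aA : a \in A by move: aQ; rewrite (swap_mem a sQ) (negbTE ay) ax.
  have yb : y != b by apply: contraNneq bQ => <-.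
  have yS : y \in S by rewrite (swap_mem y sQS) (negbTE yb) eq_sym ay yQ.
  have yR : y \notin R by rewrite (swap_mem y sR) (negbTE yy') (negbTE yA) andbF.
  have yc : y = c.
    apply/eqP; apply: contraNT yR => yc.
    have yd : y != d by apply: contraNneq dS => <-.
    by rewrite -(HSR y yc yd).
  subst c.
  have aR : a \in R by rewrite (swap_mem a sR) ax aA orbT.
  have ad : a = d.
    apply/eqP; apply: contraNT aS => ad.
    have ac : a != y by [].
    by rewrite (HSR a ac ad).
  subst d.
  have by' : b = y'.
    apply/eqP; apply: contraTT bS => by'.
    have bx : ~~ ((b != x) && (b \in A)).
      by move: bQ; rewrite (swap_mem b sQ); case/norP.
    have bR : b \notin R by rewrite (swap_mem b sR) (negbTE by') (negbTE bx).
    have bc : b != y by rewrite eq_sym.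
    have bd : b != a by apply: contraNneq bQ => ->.
    by rewrite (HSR b bc bd).
  subst b.
  have ay' : a != y' by apply: contraNneq y'A => <-.
  apply: (K22 (x:=x) (w:=a) (y:=y) (y':=y')) => //; first by rewrite eq_sym.
  by rewrite esym.
Qed.

Lemma swapC A B x y : swap A B x y -> swap (~: A) (~: B) y x.
Proof.
case=> xA xB yB yA H; split; rewrite ?inE ?negbK //.
by move=> z zy zx; rewrite !inE H.
Qed.

Lemma conf_tgt A Q R S x x' y a b c d :
  swap A Q x y -> swap A R x' y -> x != x' -> ~~ e x x' -> e x y -> e x' y ->
  swap Q S a b -> e a b -> swap S R c d -> e c d -> S != A -> False.
Proof.
move=> sQ sR xx' nxx exy ex'y sQS eab sSR ecd SA.
apply: (@conf_src (~: A) (~: Q) (~: R) (~: S) y x x' b a d c).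
- exact: swapC.
- exact: swapC.
- exact: xx'.
- exact: nxx.
- by rewrite esym.
- by rewrite esym.
- exact: swapC.
- by rewrite esym.
- exact: swapC.
- by rewrite esym.
- by apply: contraNneq SA => /setC_inj ->.
Qed.
End SetLevel.


Section Prod.
Variables (V1 V2 : finType) (e1 : rel V1) (e2 : rel V2).
Hypothesis s1 : simple_graph e1.
Hypothesis s2 : simple_graph e2.
Local Notation cr := (cart_rel e1 e2).

Lemma crE (u v : V1 * V2) : cr u v -> (u.1 == v.1) = (u.2 != v.2).
Proof.
case: u v => [u1 u2] [v1 v2]; rewrite /cart_rel /=.
case: (eqVneq u1 v1) => [<-|ne] /=.
  rewrite (proj2 s1 u1) andbF orbF => H.
  by apply/esym; apply: contraTneq H => ->; rewrite (proj2 s2).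
by case/andP => /eqP ->; rewrite eqxx.
Qed.

Lemma crC (u v : V1 * V2) : cr u v = cr v u.
Proof.
case: u v => [u1 u2] [v1 v2]; rewrite /cart_rel /=.
by rewrite (eq_sym u1) (eq_sym u2) (proj1 s1 u1) (proj1 s2 u2).
Qed.

Lemma P2 (p q r s : V1 * V2) : cr p q -> cr q s -> cr r s -> cr p r ->
  p != s -> q != r -> (p.1 == r.1) = (q.1 == s.1).
Proof.
case: p q r s => [p1 p2] [q1 q2] [r1 r2] [s1' s2'].
move=> /crE Hpq /crE Hqs /crE Hrs /crE Hpr /eqP Hps /eqP Hqr.
move: Hpq Hqs Hrs Hpr; rewrite /=.
repeat match goal with |- context [?a == ?b] => case: (@eqP _ a b) => ? end;
  by try congruence.
Qed.

Lemma P1a (p q r : V1 * V2) : cr p q -> cr p r -> p.1 == q.1 -> p.1 != r.1 ->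
  ~~ cr q r /\ exists2 s, s != p & cr q s && cr s r.
Proof.
case: p q r => [p1 p2] [q1 q2] [r1 r2] /= Hpq Hpr /eqP pq pr.
subst q1.
have := crE Hpq; rewrite eqxx /= => pq2.
have := crE Hpr; rewrite (negbTE pr) /= => /esym/negbFE/eqP pr2; subst r2.
have e2pq : e2 p2 q2.
  by move: Hpq; rewrite /cart_rel /= eqxx /= (proj2 s1) andbF orbF.
have e1pr : e1 p1 r1.
  by move: Hpr; rewrite /cart_rel /= (negbTE pr) eqxx.
split.
  rewrite /cart_rel /= (negbTE pr) /=.
  by rewrite eq_sym; move: pq2; case: (p2 == q2).
exists (r1, q2).
  by rewrite xpair_eqE negb_and eq_sym pr.
rewrite /cart_rel /= !eqxx /= e1pr orbT /=.
by rewrite (proj1 s2) e2pq.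
Qed.

Lemma P1 (p q r : V1 * V2) : cr p q -> cr p r -> (p.1 == q.1) != (p.1 == r.1) ->
  ~~ cr q r /\ exists2 s, s != p & cr q s && cr s r.
Proof.
move=> Hpq Hpr.
case: (boolP (p.1 == q.1)) => pq; case: (boolP (p.1 == r.1)) => pr //= _.
  exact: P1a.
have [H [s sp /andP [H1 H2]]] := P1a Hpr Hpq pr pq.
split; first by rewrite crC.
by exists s; rewrite // crC H2 crC H1.
Qed.

End Prod.


Ltac eqcases := repeat match goal with |- context [?a == ?b] =>
  case: (eqVneq a b) => [?|?]; try subst a end.

Section Tok.
Variables (V : finType) (e : rel V) (k : nat).
Hypothesis esy : symmetric e.
Hypothesis eirr : irreflexive e.
Local Notation T := (tokens V k).
Local Notation h := (token_rel e k).

Lemma swap_sym (A B : {set V}) x y : swap A B x y -> swap B A y x.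
Proof.
case=> xA xB yB yA H; split => // z zy zx; exact/esym/H.
Qed.

Lemma swap_eq (A B C : {set V}) x y : swap A B x y -> swap A C x y -> B = C.
Proof. by move=> sB sC; apply/setP => z; rewrite (swap_mem z sB) (swap_mem z sC). Qed.

Lemma tok_card (P : T) : #|val P| = k.
Proof. exact/eqP/(valP P). Qed.

Lemma sub_eqcard (A B : {set V}) : #|A| = #|B| -> {subset B <= A} -> A = B.
Proof.
move=> cAB sBA; apply/esym/eqP; rewrite eqEcard cAB leqnn andbT.
exact/subsetP.
Qed.

Lemma trelE (P Q : T) : h P Q -> exists x y, e x y /\ swap (val P) (val Q) x y.
Proof.
move=> /existsP [x /existsP [y /andP [exy /eqP D]]].
have D' z : (z \in val P) (+) (z \in val Q) = (z == x) || (z == y).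
  have := congr1 (fun X : {set V} => z \in X) D; rewrite /= !inE => <-.
  by case: (z \in val P); case: (z \in val Q).
have xy : x != y by apply: contraNneq (negbT (eirr x)) => {2}->.
have oth z : z != x -> z != y -> (z \in val P) = (z \in val Q).
  move=> zx zy; have := D' z; rewrite (negbTE zx) (negbTE zy) /=.
  by case: (z \in val P); case: (z \in val Q).
have Dx := D' x; have Dy := D' y.
rewrite eqxx /= in Dx; rewrite eqxx orbT in Dy.
case: (boolP (x \in val P)) => xP; case: (boolP (y \in val P)) => yP.
- exfalso.
  have xQ : x \notin val Q by move: Dx; rewrite xP; case: (x \in val Q).
  have E : val P = val Q.
    apply: sub_eqcard; first by rewrite !tok_card.
    move=> z zQ; case: (eqVneq z x) => [->//|zx]; case: (eqVneq z y) => [->//|zy].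
    by rewrite (oth z zx zy).
  by move: xQ; rewrite -E xP.
- exists x, y; split => //; split => //.
  + by move: Dx; rewrite xP; case: (x \in val Q).
  + by move: Dy; rewrite (negbTE yP); case: (y \in val Q).
- exists y, x; split; first by rewrite esy.
  split => //.
  + by move: Dy; rewrite yP; case: (y \in val Q).
  + by move: Dx; rewrite (negbTE xP); case: (x \in val Q).
  + by move=> z zy zx; apply: oth.
- exfalso.
  have xQ : x \in val Q by move: Dx; rewrite (negbTE xP); case: (x \in val Q).
  have E : val Q = val P.
    apply: sub_eqcard; first by rewrite !tok_card.
    move=> z zP; case: (eqVneq z x) => [zx|zx]; first by rewrite zx (negbTE xP) in zP.
    case: (eqVneq z y) => [zy|zy]; first by rewrite zy (negbTE yP) in zP.
    by rewrite -(oth z zx zy).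
  by move: xP; rewrite -E xQ.
Qed.

Lemma trelI (P Q : T) x y : e x y -> swap (val P) (val Q) x y -> h P Q.
Proof.
move=> exy [xP xQ yQ yP H].
apply/existsP; exists x; apply/existsP; exists y; rewrite exy /=.
apply/eqP/setP => z; rewrite !inE.
case: (eqVneq z x) => [->|zx]; first by rewrite xP (negbTE xQ).
case: (eqVneq z y) => [->|zy]; first by rewrite yQ (negbTE yP).
by rewrite (H z zx zy); case: (z \in val Q).
Qed.

Lemma move_ex (P : T) x y : x \in val P -> y \notin val P ->
  exists Q : T, swap (val P) (val Q) x y.
Proof.
move=> xP yP.
have cP : #|y |: (val P :\ x)| == k.
  rewrite cardsU1 !inE (negbTE yP) andbF /=.
  by apply/eqP; rewrite [RHS](esym (tok_card P)) (cardsD1 x (val P)) xP.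
exists (insubd P (y |: (val P :\ x))).
rewrite insubdK; last exact: cP.
split.
- by [].
- by rewrite !inE eqxx /= orbF; apply: contraNneq yP => <-.
- by rewrite !inE eqxx.
- by [].
- by move=> z zx zy; rewrite !inE (negbTE zy) zx.
Qed.

Hypothesis Gconn : connected_graph e.

Lemma slide (p : seq V) (a : V) (P : T) b : path e a p -> b = last a p ->
  a \in val P -> b \notin val P ->
  exists Q : T, swap (val P) (val Q) a b /\ connect h P Q.
Proof.
elim: p a P => [|w p IH] a P /=.
  by move=> _ -> ->.
case/andP => eaw pw bl aP bP.
have aw : a != w by apply: contraNneq (negbT (eirr a)) => {2}->.
have ab : a != b by apply: contraNneq bP => <-.
case: (boolP (w \in val P)) => wP.
- have [Q1 [sQ1 cQ1]] := IH w P pw bl wP bP.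
  have aQ1 : a \in val Q1 by rewrite (swap_mem a sQ1) aw aP orbT.
  have wQ1 : w \notin val Q1 by have [] := sQ1.
  have [Q2 sQ2] := move_ex aQ1 wQ1.
  exists Q2; split.
    split => //.
    + by rewrite (swap_mem a sQ2) eqxx (negbTE aw).
    + by rewrite (swap_mem b sQ2) (swap_mem b sQ1) eqxx /= (eq_sym b a) ab orbT.
    + move=> z za zb; rewrite (swap_mem z sQ2) (swap_mem z sQ1) za (negbTE zb) /=.
      by case: (eqVneq z w) => [->|zw] //=.
  apply: connect_trans cQ1 (connect1 _); exact: trelI eaw sQ2.
- have [Q1 sQ1] := move_ex aP wP.
  have hPQ1 : h P Q1 by exact: trelI eaw sQ1.
  case: (eqVneq w b) => [wb|wb].
    by subst w; exists Q1; split => //; apply: connect1.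
  have wQ1 : w \in val Q1 by have [] := sQ1.
  have bQ1 : b \notin val Q1 by rewrite (swap_mem b sQ1) eq_sym (negbTE wb) (negbTE bP) andbF.
  have [Q2 [sQ2 cQ2]] := IH w Q1 pw bl wQ1 bQ1.
  exists Q2; split.
    split => //.
    + by rewrite (swap_mem a sQ2) (swap_mem a sQ1) (negbTE aw) eqxx /= orbF.
    + by have [] := sQ2.
    + move=> z za zb; rewrite (swap_mem z sQ2) (swap_mem z sQ1) za (negbTE zb) /=.
      by case: (eqVneq z w) => [->|zw] //=; rewrite (negbTE wP).
  exact: connect_trans (connect1 hPQ1) cQ2.
Qed.

Lemma tok_conn (P Q : T) : connect h P Q.
Proof.
move: {2}#|val P :\: val Q| (erefl #|val P :\: val Q|) => n.
elim: n P => [|n IH] P Hn.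
  have -> // : P = Q; apply/val_inj/esym/sub_eqcard; first by rewrite !tok_card.
  move=> z zP; apply/negPn/negP => zQ.
  by move: Hn; rewrite (cardsD1 z) !inE zQ zP.
have [a aPQ] : exists a, a \in val P :\: val Q.
  by apply/set0Pn; rewrite -card_gt0 Hn.
have [b bQP] : exists b, b \in val Q :\: val P.
  have cE : #|val Q :\: val P| = #|val P :\: val Q|.
    by rewrite !cardsD setIC !tok_card.
  by apply/set0Pn; rewrite -card_gt0 cE Hn.
move: aPQ bQP; rewrite !inE => /andP [aQ aP] /andP [bP bQ].
have /connectP [p pp pl] := Gconn a b.
have [Q1 [sQ1 cQ1]] := slide pp pl aP bP.
apply: connect_trans cQ1 (IH _ _).
have -> : val Q1 :\: val Q = (val P :\: val Q) :\ a.
  apply/setP => z; rewrite !inE (swap_mem z sQ1).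
  case: (eqVneq z b) => [->|zb] /=; first by rewrite bQ /= andbF.
  by case: (eqVneq z a) => //= _; case: (z \in val Q).
by move: Hn; rewrite (cardsD1 a) !inE aQ aP => -[].
Qed.

End Tok.


Section SwapMore.
Variable V : finType.
Implicit Types A Q R : {set V}.

Lemma swap_src A Q R x y y' : swap A Q x y -> swap A R x y' -> y != y' -> swap Q R y y'.
Proof.
move=> sQ sR yy'.
have [xA xQ yQ yA HQ] := sQ; have [_ xR y'R y'A HR] := sR.
split => //.
- by rewrite (swap_mem y sR) (negbTE yy') (negbTE yA) andbF.
- by rewrite (swap_mem y' sQ) eq_sym (negbTE yy') (negbTE y'A) andbF.
- by move=> z zy zy'; rewrite (swap_mem z sR) (swap_mem z sQ) (negbTE zy) (negbTE zy').
Qed.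

Lemma swap_tgt A Q R x x' y : swap A Q x y -> swap A R x' y -> x != x' -> swap Q R x' x.
Proof.
move=> sQ sR xx'.
have [xA xQ yQ yA HQ] := sQ; have [x'A x'R _ _ HR] := sR.
have x'y : x' != y by apply: contraTneq x'A => ->.
have xy : x != y by apply: contraTneq xA => ->.
split => //.
- by rewrite (swap_mem x' sQ) (negbTE x'y) eq_sym xx' x'A.
- by rewrite (swap_mem x sR) (negbTE xy) xx' xA.
- by move=> z zx' zx; rewrite (swap_mem z sR) (swap_mem z sQ) zx zx'.
Qed.

Lemma swap_sq A Q R R' s t x' y' : swap A Q s t -> swap A R x' y' -> swap Q R' x' y' ->
  s != x' -> t != y' -> swap R R' s t.
Proof.
move=> sQ sR sR' sx' ty'.
have [sA sQn tQ tA HQ] := sQ; have [x'A x'R y'R y'A HR] := sR.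
have sy' : s != y' by apply: contraTneq sA => ->.
have tx' : t != x' by apply: contraNneq tA => ->.
split.
- by rewrite (swap_mem s sR) (negbTE sy') sx' sA.
- have st : s != t by apply: contraTneq sA => ->.
  by rewrite (swap_mem s sR') (negbTE sy') (swap_mem s sQ) eqxx (negbTE st) andbF.
- by rewrite (swap_mem t sR') (negbTE (ty')) tx' tQ.
- by rewrite (swap_mem t sR) (negbTE ty') (negbTE tA) andbF.
- move=> z zs zt; rewrite (swap_mem z sR') (swap_mem z sQ) (swap_mem z sR).
  by rewrite (negbTE zt) zs.
Qed.
End SwapMore.


Section Main.
Variables (V : finType) (e : rel V) (k : nat).
Hypothesis esy : symmetric e.
Hypothesis eirr : irreflexive e.
Hypothesis free : C4_diamond_free e.
Hypothesis Gconn : connected_graph e.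
Local Notation T := (tokens V k).
Local Notation h := (token_rel e k).
Variables (V1 V2 : finType) (e1 : rel V1) (e2 : rel V2).
Hypothesis s1 : simple_graph e1.
Hypothesis s2 : simple_graph e2.
Variables (f : T -> V1 * V2) (g : V1 * V2 -> T).
Hypothesis hf : forall P Q, h P Q = cart_rel e1 e2 (f P) (f Q).
Hypothesis finj : injective f.
Hypothesis fg : cancel g f.

Definition col (P Q : T) := (f P).1 == (f Q).1.

Lemma L1 p q r : h p q -> h p r -> col p q != col p r ->
  ~~ h q r /\ exists2 s, s != p & h q s && h s r.
Proof.
rewrite !hf => Hq Hr Hc.
have [H [s sp /andP [H1 H2]]] := P1 s1 s2 Hq Hr Hc.
split => //.
exists (g s).
  by apply: contraNneq sp => <-; rewrite fg.
by rewrite !hf fg H1 H2.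
Qed.

Lemma L2 p q r s : h p q -> h q s -> h r s -> h p r -> p != s -> q != r ->
  col p r = col q s.
Proof.
rewrite !hf => H1 H2 H3 H4 ps qr.
apply: (P2 s1 s2 H1 H2 H3 H4); by rewrite (inj_eq finj).
Qed.

Lemma tok_neq (P Q : T) z : z \in val P -> z \notin val Q -> P != Q.
Proof. by move=> zP zQ; apply: contraNneq zQ => <-. Qed.

Lemma CS (P Q R : T) x y y' : swap (val P) (val Q) x y -> swap (val P) (val R) x y' ->
  e x y -> e x y' -> col P Q = col P R.
Proof.
move=> sQ sR exy exy'.
case: (eqVneq y y') => [yy'|yy'].
  by subst y'; have -> : Q = R by apply/val_inj/(swap_eq sQ sR).
case: (boolP (col P Q == col P R)) => [/eqP //|Hc].
have [nQR [S SP /andP [hQS hSR]]] := L1 (trelI exy sQ) (trelI exy' sR) Hc.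
case: (boolP (e y y')) => eyy.
  by move: nQR; rewrite (trelI eyy (swap_src sQ sR yy')).
have [a [b [eab sQS]]] := trelE esy eirr hQS.
have [c [d [ecd sSR]]] := trelE esy eirr hSR.
have := (conf_src esy free sQ sR yy' eyy exy exy' sQS eab sSR ecd).
move=> H; by exfalso; apply: H; apply: contraNneq SP => /val_inj ->.
Qed.

Lemma CT (P Q R : T) x x' y : swap (val P) (val Q) x y -> swap (val P) (val R) x' y ->
  e x y -> e x' y -> col P Q = col P R.
Proof.
move=> sQ sR exy ex'y.
case: (eqVneq x x') => [xx'|xx'].
  by subst x'; have -> : Q = R by apply/val_inj/(swap_eq sQ sR).
case: (boolP (col P Q == col P R)) => [/eqP //|Hc].
have [nQR [S SP /andP [hQS hSR]]] := L1 (trelI exy sQ) (trelI ex'y sR) Hc.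
case: (boolP (e x x')) => exx.
  by move: nQR; rewrite (trelI (y := x) _ (swap_tgt sQ sR xx')) // esy.
have [a [b [eab sQS]]] := trelE esy eirr hQS.
have [c [d [ecd sSR]]] := trelE esy eirr hSR.
have := (conf_tgt esy free sQ sR xx' exx exy ex'y sQS eab sSR ecd).
move=> H; by exfalso; apply: H; apply: contraNneq SP => /val_inj ->.
Qed.

Definition bad (P : T) s t x' y' := exists Q R,
  [/\ swap (val P) (val Q) s t, swap (val P) (val R) x' y', e s t, e x' y'
    & col P Q != col P R].

Lemma DISJ P s t x' y' : bad P s t x' y' -> s != x' /\ t != y'.
Proof.
case=> Q [R [sQ sR est exy Hc]]; split.
  apply: contraNneq Hc => sx; subst x'.
  by rewrite (CS sQ sR est exy).
apply: contraNneq Hc => ty; subst y'.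
by rewrite (CT sQ sR est exy).
Qed.

Lemma FLIP P s t x' y' : bad P s t x' y' ->
  exists Q : T, swap (val P) (val Q) s t /\ bad Q t s x' y'.
Proof.
move=> B; have [sx' ty'] := DISJ B.
case: B => Q [R [sQ sR est exy Hc]].
exists Q; split => //.
have [sP sQn tQ tP _] := sQ; have [x'P x'R y'R y'P _] := sR.
have x'Q : x' \in val Q.
  by rewrite (swap_mem x' sQ) (eq_sym x' s) sx' x'P orbT.
have y'Q : y' \notin val Q.
  by rewrite (swap_mem y' sQ) eq_sym (negbTE ty') (negbTE y'P) andbF.
have [R' sR'] := move_ex x'Q y'Q.
exists P, R'; split => //.
- exact: swap_sym.
- by rewrite esy.
have sRR' := swap_sq sQ sR sR' sx' ty'.
have E : col P R = col Q R'.
  apply: L2.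
  - exact: trelI est sQ.
  - exact: trelI exy sR'.
  - exact: trelI est sRR'.
  - exact: trelI exy sR.
  - apply: (@tok_neq _ _ s) => //; by have [] := sRR'.
  - exact: (@tok_neq _ _ x').
by rewrite -E /col (eq_sym (f Q).1).
Qed.

Lemma STEP P s t x' y' w : bad P s t x' y' -> w != s -> w != t ->
  (e s w && (w \notin val P)) || (e w t && (w \in val P)) ->
  exists s2 t2, bad P s2 t2 x' y' /\ ((w == s2) || (w == t2)).
Proof.
case=> Q [R [sQ sR est exy Hc]] ws wt.
have [sP sQn tQ tP _] := sQ.
case/orP => /andP [ew wP].
- have [Q2 sQ2] := move_ex sP wP.
  exists s, w; split; last by rewrite eqxx orbT.
  exists Q2, R; split => //.
  by rewrite -(CS sQ sQ2 est ew).
- have [Q2 sQ2] := move_ex wP tP.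
  exists w, t; split; last by rewrite eqxx.
  exists Q2, R; split => //.
  by rewrite -(CT sQ sQ2 est ew).
Qed.

Lemma nobad (p : seq V) u : path e u p -> forall P s t x' y', bad P s t x' y' ->
  (u == s) || (u == t) -> (last u p == x') || (last u p == y') -> False.
Proof.
elim: p u => [|w p IH] u /=.
  move=> _ P s t x' y' B.
  have [sx' ty'] := DISJ B.
  case: B => Q [R [sQ sR _ _ _]].
  have [sP _ _ tP _] := sQ; have [x'P _ _ y'P _] := sR.
  case/orP => /eqP -> /orP [] /eqP E; subst.
  - by rewrite eqxx in sx'.
  - by rewrite sP in y'P.
  - by rewrite x'P in tP.
  - by rewrite eqxx in ty'.
case/andP => euw pw P s t x' y' B Hu Hl.
case: (boolP ((w == s) || (w == t))) => Hw.
  exact: (IH w pw P s t x' y' B Hw Hl).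
move: Hw; rewrite negb_or => /andP [ws wt].
have [sx' ty'] := DISJ B.
case/orP: Hu => /eqP Hu; subst u.
- case: (boolP (w \in val P)) => wP.
  + have [Q [sQ BQ]] := FLIP B.
    have wQ : w \in val Q by rewrite (swap_mem w sQ) (negbTE wt) ws wP.
    have [sa [tb [B2 H2]]] := STEP BQ wt ws (w := w) (introT orP (or_intror (introT andP (conj (etrans (esy _ _) euw) wQ)))).
    exact: (IH w pw Q sa tb x' y' B2 H2 Hl).
  + have [sa [tb [B2 H2]]] := STEP B ws wt (w := w) (introT orP (or_introl (introT andP (conj euw wP)))).
    exact: (IH w pw P sa tb x' y' B2 H2 Hl).
- case: (boolP (w \in val P)) => wP.
  + have [sa [tb [B2 H2]]] := STEP B ws wt (w := w) (introT orP (or_intror (introT andP (conj (etrans (esy _ _) euw) wP)))).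
    exact: (IH w pw P sa tb x' y' B2 H2 Hl).
  + have [Q [sQ BQ]] := FLIP B.
    have wQ : w \notin val Q by rewrite (swap_mem w sQ) (negbTE wt) ws (negbTE wP).
    have [sa [tb [B2 H2]]] := STEP BQ wt ws (w := w) (introT orP (or_introl (introT andP (conj euw wQ)))).
    exact: (IH w pw Q sa tb x' y' B2 H2 Hl).
Qed.

Lemma KL (P Q R : T) : h P Q -> h P R -> col P Q = col P R.
Proof.
move=> hQ hR; case: (boolP (col P Q == col P R)) => [/eqP //|Hc].
have [s [t [est sQ]]] := trelE esy eirr hQ.
have [x' [y' [exy sR]]] := trelE esy eirr hR.
have B : bad P s t x' y' by exists Q, R.
have /connectP [p pp pl] := Gconn s x'.
by exfalso; apply: (nobad pp B); rewrite ?eqxx // -pl eqxx.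
Qed.


Lemma hsym (P Q : T) : h P Q = h Q P.
Proof. by rewrite !hf crC. Qed.

Lemma path_inv (p : seq T) (X : T) : path h X p -> forall b,
  (forall Z, h X Z -> col X Z = b) ->
  if b then (f (last X p)).1 = (f X).1 else (f (last X p)).2 = (f X).2.
Proof.
elim: p X => [|Z p IH] X /=.
  by move=> _ [].
case/andP => hXZ pZ b Hb.
have HZ : forall Z', h Z Z' -> col Z Z' = b.
  move=> Z' hZZ'; rewrite (KL hZZ' (_ : h Z X)); last by rewrite hsym.
  by rewrite /col eq_sym -(Hb Z hXZ).
have := IH Z pZ b HZ.
have cXZ := Hb Z hXZ.
case: b Hb HZ cXZ => Hb HZ cXZ ->.
  by apply/esym/eqP.
move: hXZ; rewrite hf => /(crE s1 s2); rewrite -/(col X Z) cXZ.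
by move/esym/negbFE/eqP.
Qed.

End Main.


Theorem corollary27 (V : finType) (e : rel V) (k : nat) :
  simple_graph e -> connected_graph e -> C4_diamond_free e ->
  1 <= k <= #|V| - 1 ->
  prime_graph (token_rel e k).
Proof.
move=> [esy eirr] Gc free _.
move=> [V1 [V2 [e1 [e2 [s1 [s2 [c1 [c2 [f [[g fgK gfK] hf]]]]]]]]]].
have finj := can_inj fgK.
have [a1 [a2 [_ _ a12]]] := card_gt1P c1.
have [b1 [b2 [_ _ b12]]] := card_gt1P c2.
set P := g (a1, b1); set Q := g (a2, b2).
have /connectP [p pp pl] := tok_conn eirr Gc P Q.
case: p pp pl => [|Z p] pp pl.
  move: (congr1 f pl); rewrite /= /P /Q !gfK => -[] E _; by rewrite E eqxx in a12.
have hPZ : token_rel e k P Z by case/andP: pp.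
have := path_inv esy eirr free Gc s1 s2 hf finj gfK pp (b := col f P Z).
have H : forall Z', token_rel e k P Z' -> col f P Z' = col f P Z.
  by move=> Z' hZ'; apply: (KL esy eirr free Gc s1 s2 hf finj gfK).
move=> /(_ H); rewrite -pl /P /Q !gfK /=.
case: (col f _ Z) => E; [by rewrite E eqxx in a12 | by rewrite E eqxx in b12].
Qed.
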